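(* For $\alpha>0$ and $t\in\mathbb{R}$, let $A(\alpha)=\begin{pmatrix}-1&\alpha\\0&-1\end{pmatrix}$ and $B=\begin{pmatrix}t\\1\end{pmatrix}$, and let $X$ solve $A(\alpha)X+XA(\alpha)^*=-BB^*$, with singular values $s_1\ge s_2>0$. Then $X=\frac14\begin{pmatrix}2t^2+2\alpha t+\alpha^2 & \alpha+2t\\ \alpha+2t & 2\end{pmatrix}$, and $$\max_{t\in\mathbb{R}}\frac{s_2}{s_1}=\begin{cases}\alpha^2/4, & 0<\alpha\le 2,\\ 4/\alpha^2, & \alpha\ge 2,\end{cases}$$ with the maximum attained at $t=-\alpha/2$. *)

(* Defs.v *)
From HB Require Import structures.
From mathcomp Require Import all_boot all_order all_algebra.
Set Implicit Arguments. Unset Strict Implicit. Unset Printing Implicit Defensive.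
Import Order.TTheory GRing.Theory Num.Theory.
Local Open Scope ring_scope.

Section Defs.
Variable R : rcfType.

Definition Amat (a : R) : 'M[R]_2 :=
  \matrix_(i < 2, j < 2)
    (if i == j then -1
     else if (val i == 0%N) && (val j == 1%N) then a else 0).

Definition Bvec (t : R) : 'cV[R]_2 :=
  \col_(i < 2) (if val i == 0%N then t else 1).

(* Continuous Lyapunov equation  A X + X A^* = - B B^*  (real case: ^* = ^T) *)
Definition lyap (A : 'M[R]_2) (B : 'cV[R]_2) (X : 'M[R]_2) : Prop :=
  A *m X + X *m A^T = - (B *m B^T).

Definition Xform (a t : R) : 'M[R]_2 :=
  \matrix_(i < 2, j < 2)
    ((4%:R)^-1 *
     (if (val i == 0%N) && (val j == 0%N) then 2%:R * t ^+ 2 + 2%:R * a * t + a ^+ 2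
      else if (val i == 1%N) && (val j == 1%N) then 2%:R
      else a + 2%:R * t)).

(* s1 >= s2 >= 0 are the singular values of X : their squares are the
   eigenvalues (with multiplicity) of X^* X, i.e. the roots of its
   characteristic polynomial. *)
Definition singvals2 (X : 'M[R]_2) (s1 s2 : R) : Prop :=
  [/\ 0 <= s2, s2 <= s1 &
      char_poly (X^T *m X) = ('X - (s1 ^+ 2)%:P) * ('X - (s2 ^+ 2)%:P)].

Definition maxratio (a : R) : R :=
  if a <= 2%:R then a ^+ 2 / 4%:R else 4%:R / a ^+ 2.

End Defs.

(* Main.v *)
From HB Require Import structures.
From mathcomp Require Import all_boot all_order all_algebra.
From mathcomp Require Import ring lra.
Require Import Defs.
Import Order.TTheory GRing.Theory Num.Theory.
Local Open Scope ring_scope.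
Lemma det22 (R: comNzRingType) (M : 'M[R]_2) : \det M = M 0 0 * M 1 1 - M 0 1 * M 1 0.
Proof.
rewrite (expand_det_row _ ord0) !big_ord_recr big_ord0 /= /cofactor !det_mx11 /=.
rewrite !mxE /=.
have e1 : widen_ord (m:=2) (leqnSn 1) ord_max = 0 by apply/val_inj.
have e2 : lift ord0 (0:'I_1) = 1 :> 'I_2 by apply/val_inj.
have e3 : lift (ord_max:'I_2) (0:'I_1) = 0 :> 'I_2 by apply/val_inj.
have e4 : ord_max = 1 :> 'I_2 by apply/val_inj.
rewrite e1 e2 e3 e4 addn0 add0n expr0 expr1. ring.
Qed.

Lemma charpoly22 (R : comNzRingType) (M : 'M[R]_2): char_poly M =
  'X^2 - (M 0 0 + M 1 1)%:P * 'X + (M 0 0 * M 1 1 - M 0 1 * M 1 0)%:P.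
Proof.
rewrite /char_poly det22 /char_poly_mx !mxE /= !mulr1n !mulr0n.
rewrite polyCB !polyCM polyCD. ring.
Qed.

Lemma ord2P (P : 'I_2 -> Prop) : P 0 -> P 1 -> forall i, P i.
Proof.
move=> h0 h1 [[|[|k]] hk].
- by have -> : Ordinal hk = 0 by apply/val_inj.
- by have -> : Ordinal hk = 1 by apply/val_inj.
- by [].
Qed.


Set Implicit Arguments.
Section S.
Variable R : rcfType.
Lemma arith_le (a s1 s2 T : R) : 0 < a -> 0 <= s2 -> s2 <= s1 ->
  s1 * s2 = a^+2 / 16%:R -> s1 + s2 = T -> (a^+2 + 4%:R) / 8%:R <= T ->
  s2 / s1 <= maxratio a.
Proof.
move=> ha h2 h21 hp hs hT.
have s1p : 0 < s1 by nra.
have k1 : (s1 - 1/2%:R) * (s1 - a^+2/8%:R) >= 0 by nra.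
rewrite /maxratio ler_pdivrMr //; case: ifP => ha2.
- have : s1 >= 1/2%:R by nra.
  move=> h; rewrite mulrAC ler_pdivlMr //. nra.
- have ha2' : 2%:R < a by rewrite ltNge ha2.
  have : s1 >= a^+2/8%:R by nra.
  move=> h. rewrite mulrAC ler_pdivlMr; last by nra. nra.
Qed.

Lemma arith_eq (a s1 s2 T : R) : 0 < a -> 0 <= s2 -> s2 <= s1 ->
  s1 * s2 = a^+2 / 16%:R -> s1 + s2 = T -> T = (a^+2 + 4%:R) / 8%:R ->
  s2 / s1 = maxratio a.
Proof.
move=> ha h2 h21 hp hs hT.
have s1p : 0 < s1 by nra.
have k1 : (s1 - 1/2%:R) * (s1 - a^+2/8%:R) = 0 by nra.
rewrite /maxratio.
case: ifP => ha2.
- have h : s1 = 1/2%:R.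
    move/eqP: k1; rewrite mulf_eq0 !subr_eq0 => /orP[/eqP //|/eqP e]; nra.
  have h' : s2 = a^+2/8%:R by rewrite h in hp; lra.
  by rewrite h h'; field.
- have ha2' : 2%:R < a by rewrite ltNge ha2.
  have h : s1 = a^+2/8%:R.
    move/eqP: k1; rewrite mulf_eq0 !subr_eq0 => /orP[/eqP e|/eqP //]; nra.
  have a2p : 0 < a^+2 by nra.
  have h' : s2 = 1/2%:R.
    rewrite h in hp.
    apply: (mulfI (x:=a^+2/8%:R)); first by rewrite gt_eqF // divr_gt0.
    by rewrite hp; field.
  rewrite h h'; field; by rewrite gt_eqF.
Qed.
Lemma TX_entries (X : 'M[R]_2) :
  [/\ (X^T *m X) 0 0 = X 0 0 * X 0 0 + X 1 0 * X 1 0,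
      (X^T *m X) 1 1 = X 0 1 * X 0 1 + X 1 1 * X 1 1,
      (X^T *m X) 0 1 = X 0 0 * X 0 1 + X 1 0 * X 1 1 &
      (X^T *m X) 1 0 = X 0 1 * X 0 0 + X 1 1 * X 1 0].
Proof.
rewrite !mxE !big_ord_recr !big_ord0 /= !mxE.
have e1 : widen_ord (m:=2) (leqnSn 1) ord_max = 0 by apply/val_inj.
have e4 : ord_max = 1 :> 'I_2 by apply/val_inj.
rewrite e1 e4 !add0r; split; ring.
Qed.

Lemma sv_gen (X : 'M[R]_2) s1 s2 : X 0 1 = X 1 0 ->
  0 <= X 0 0 * X 1 1 - X 0 1 * X 1 0 -> 0 <= X 0 0 + X 1 1 ->
  singvals2 X s1 s2 ->
  s1 * s2 = X 0 0 * X 1 1 - X 0 1 * X 1 0 /\ s1 + s2 = X 0 0 + X 1 1.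
Proof.
move=> hs hD hT [h2 h21 hc].
rewrite charpoly22 in hc.
have [t00 t11 t01 t10] := TX_entries X.
rewrite t00 t11 t01 t10 in hc.
have e0 := congr1 (fun p => p.[0]) hc.
have e1 := congr1 (fun p => p.[1]) hc.
move: e0 e1 => /=; rewrite !hornerE /= => e0 e1.
move: hD hT e0 e1; rewrite -hs.
set x := X 0 0; set y := X 0 1; set w := X 1 1 => hD hT e0 e1.
have hsq : (s1 * s2) ^+ 2 = (x * w - y * y) ^+ 2 by rewrite expr2; nra.
have hp : s1 * s2 = x * w - y * y.
  have := hsq; move/eqP; rewrite eqf_sqr => /orP[/eqP //|/eqP hn]; nra.
have hsum : s1^+2 + s2^+2 = x * x + 2%:R * y * y + w * w by nra.
split => //.
have : (s1 + s2) ^+ 2 = (x + w) ^+ 2 by nra.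
move/eqP; rewrite eqf_sqr => /orP[/eqP //|/eqP hn]; nra.
Qed.
Lemma sv_exist (X : 'M[R]_2) : X 0 1 = X 1 0 ->
  0 <= X 0 0 * X 1 1 - X 0 1 * X 1 0 -> 0 <= X 0 0 + X 1 1 ->
  exists s1 s2, singvals2 X s1 s2.
Proof.
move=> hs hD hT.
move: hD hT; rewrite -hs.
set x := X 0 0; set y := X 0 1; set w := X 1 1 => hD hT.
set q := Num.sqrt ((x - w) ^+ 2 + 4%:R * y ^+ 2).
have hq0 : 0 <= (x - w) ^+ 2 + 4%:R * y ^+ 2 by rewrite addr_ge0 ?sqr_ge0 // mulr_ge0 ?sqr_ge0.
have hq : q ^+ 2 = (x - w) ^+ 2 + 4%:R * y ^+ 2 by rewrite sqr_sqrtr.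
have hqp : 0 <= q by rewrite sqrtr_ge0.
have hq2 : q ^+ 2 <= (x + w) ^+ 2 by rewrite hq; lra.
have hqT : q <= x + w by nra.
exists ((x + w + q) / 2%:R), ((x + w - q) / 2%:R); split.
- lra.
- lra.
rewrite charpoly22.
have [t00 t11 t01 t10] := TX_entries X.
rewrite t00 t11 t01 t10 -/x -/w -/y -hs -/y.
have -> : ('X - (((x + w + q) / 2%:R) ^+ 2)%:P) * ('X - (((x + w - q) / 2%:R) ^+ 2)%:P)
   = 'X^2 - (((x + w + q) / 2%:R) ^+ 2 + ((x + w - q) / 2%:R) ^+ 2)%:P * 'X
       + (((x + w + q) / 2%:R) ^+ 2 * ((x + w - q) / 2%:R) ^+ 2)%:P.
  rewrite polyCD polyCM. ring.
have E1 : x * x + y * y + (y * y + w * w) =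
   ((x + w + q) / 2%:R) ^+ 2 + ((x + w - q) / 2%:R) ^+ 2 by lra.
have hq4 : q ^+ 4 = ((x - w) ^+ 2 + 4%:R * y ^+ 2) ^+ 2 by rewrite -hq -exprM.
have E2 : (x * x + y * y) * (y * y + w * w) - (x * y + y * w) * (y * x + w * y) =
  ((x + w + q) / 2%:R) ^+ 2 * ((x + w - q) / 2%:R) ^+ 2 by nra.
by rewrite E1 E2.
Qed.
Lemma lyap_entries (a t : R) (X : 'M[R]_2) : lyap (Amat a) (Bvec t) X ->
  [/\ -2%:R * X 0 0 + a * (X 1 0 + X 0 1) = - t^+2,
      -2%:R * X 0 1 + a * X 1 1 = - t,
      -2%:R * X 1 0 + a * X 1 1 = - t &
      -2%:R * X 1 1 = -1].
Proof.
move/matrixP=> H.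
have h00 := H 0 0. have h01 := H 0 1. have h10 := H 1 0. have h11 := H 1 1.
move: h00 h01 h10 h11.
rewrite !mxE !big_ord_recr !big_ord0 /= !mxE /=.
have e1 : widen_ord (m:=2) (leqnSn 1) ord_max = 0 by apply/val_inj.
have e4 : ord_max = 1 :> 'I_2 by apply/val_inj.
rewrite e1 e4 => h00 h01 h10 h11.
split; lra.
Qed.

Lemma Xform_entries (a t : R) :
  [/\ Xform a t 0 0 = 4%:R^-1 * (2%:R * t ^+ 2 + 2%:R * a * t + a ^+ 2),
      Xform a t 0 1 = 4%:R^-1 * (a + 2%:R * t),
      Xform a t 1 0 = 4%:R^-1 * (a + 2%:R * t) &
      Xform a t 1 1 = 4%:R^-1 * 2%:R].
Proof. by rewrite !mxE. Qed.

Lemma Xform_lyap (a t : R) : lyap (Amat a) (Bvec t) (Xform a t).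
Proof.
have e1 : widen_ord (m:=2) (leqnSn 1) ord_max = 0 by apply/val_inj.
have e4 : ord_max = 1 :> 'I_2 by apply/val_inj.
apply/matrixP => i j; move: i j; apply: ord2P; apply: ord2P;
rewrite !mxE !big_ord_recr !big_ord0 /= !mxE /=;
rewrite ?e1 ?e4 /= ?mxE /=. all: by field.
Qed.

Lemma lyap_sol (a t : R) X : lyap (Amat a) (Bvec t) X -> X = Xform a t.
Proof.
move=> /lyap_entries [h00 h01 h10 h11].
have e11 : X 1 1 = 2%:R^-1 by lra.
rewrite e11 in h01 h10.
have e01 : X 0 1 = 4%:R^-1 * (a + 2%:R * t) by lra.
have e10 : X 1 0 = 4%:R^-1 * (a + 2%:R * t) by lra.
rewrite e01 e10 in h00.
have e00 : X 0 0 = 4%:R^-1 * (2%:R * t ^+ 2 + 2%:R * a * t + a ^+ 2) by lra.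
have [f00 f01 f10 f11] := Xform_entries a t.
apply/matrixP => i j; move: i j; apply: ord2P; apply: ord2P.
all: rewrite ?f00 ?f01 ?f10 ?f11 ?e00 ?e01 ?e10 ?e11 //.
by field.
Qed.
Lemma Xform_DT (a t : R) :
  let X := Xform a t in
  [/\ X 0 1 = X 1 0,
      X 0 0 * X 1 1 - X 0 1 * X 1 0 = a ^+ 2 / 16%:R,
      X 0 0 + X 1 1 = (a ^+ 2 + 4%:R) / 8%:R + (t + a / 2%:R) ^+ 2 / 2%:R &
      0 <= X 0 0 + X 1 1].
Proof.
have [f00 f01 f10 f11] := Xform_entries a t.
rewrite /= f00 f01 f10 f11.
have E : 4%:R^-1 * (2%:R * t ^+ 2 + 2%:R * a * t + a ^+ 2) + 4%:R^-1 * 2%:R =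
   (a ^+ 2 + 4%:R) / 8%:R + (t + a / 2%:R) ^+ 2 / 2%:R by field.
split => //; first by field.
rewrite E; apply: addr_ge0; apply: divr_ge0; rewrite ?sqr_ge0 ?addr_ge0 ?sqr_ge0 // ler0n.
Qed.
End S.
Unset Implicit Arguments.

Theorem mainTheorem5 (R : rcfType) (alpha : R) (halpha : 0 < alpha) :
  (forall (t : R), exists (X : 'M[R]_2) (s1 s2 : R),
      lyap (Amat alpha) (Bvec t) X /\ singvals2 X s1 s2) /\
  (forall (t : R) (X : 'M[R]_2),
      lyap (Amat alpha) (Bvec t) X -> X = Xform alpha t) /\
  (forall (t : R) (X : 'M[R]_2) (s1 s2 : R),
      lyap (Amat alpha) (Bvec t) X -> singvals2 X s1 s2 ->
      s2 / s1 <= maxratio alpha) /\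
  (forall (X : 'M[R]_2) (s1 s2 : R),
      lyap (Amat alpha) (Bvec (- (alpha / 2%:R))) X -> singvals2 X s1 s2 ->
      s2 / s1 = maxratio alpha).
Proof.
split.
  move=> t; have [hs hD hT hT0] := @Xform_DT R alpha t.
  have hD0 : 0 <= Xform alpha t 0 0 * Xform alpha t 1 1 - Xform alpha t 0 1 * Xform alpha t 1 0.
    by rewrite hD divr_ge0 ?sqr_ge0.
  have [s1 [s2 h]] := @sv_exist R _ hs hD0 hT0.
  by exists (Xform alpha t), s1, s2; split => //; apply: Xform_lyap.
split; first by move=> t X; apply: lyap_sol.
split.
  move=> t X s1 s2 hl hsv; rewrite (@lyap_sol R _ _ _ hl) in hsv.
  have [hs hD hT hT0] := @Xform_DT R alpha t.
  have hD0 : 0 <= Xform alpha t 0 0 * Xform alpha t 1 1 - Xform alpha t 0 1 * Xform alpha t 1 0.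
    by rewrite hD divr_ge0 ?sqr_ge0.
  have [hp hsum] := @sv_gen R _ _ _ hs hD0 hT0 hsv.
  case: hsv => h2 h21 _.
  apply: (@arith_le R _ _ _ _ halpha h2 h21 _ hsum); first by rewrite hp hD.
  rewrite hT lerDl; apply: divr_ge0; rewrite ?sqr_ge0 //; lra.
move=> X s1 s2 hl hsv; rewrite (@lyap_sol R _ _ _ hl) in hsv.
set t := - (alpha / 2%:R) in hsv *.
have [hs hD hT hT0] := @Xform_DT R alpha t.
have hD0 : 0 <= Xform alpha t 0 0 * Xform alpha t 1 1 - Xform alpha t 0 1 * Xform alpha t 1 0.
  by rewrite hD divr_ge0 ?sqr_ge0.
have [hp hsum] := @sv_gen R _ _ _ hs hD0 hT0 hsv.
case: hsv => h2 h21 _.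
apply: (@arith_eq R _ _ _ _ halpha h2 h21 _ hsum); first by rewrite hp hD.
by rewrite hT /t addNr expr0n /= mul0r addr0.
Qed.
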